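(* There is a constant $C$ such that every finite graph $G$ satisfies $L(G)\le T(D(G)+\log^*D(G)+C)$.
   Context: The tower function is $T(0)=1$, $T(i)=2^{T(i-1)}$; $\log^* n=\min\{i: T(i)\ge n\}$. Graphs are simple undirected graphs viewed as structures for the first-order language with adjacency symbol $\sim$ and equality. A sentence defines a finite graph $G$ if it is true on $G$ and false on every graph (of any cardinality) not isomorphic to $G$. $D(G)$ is the minimum quantifier rank (maximum number of nested quantifiers) of a sentence defining $G$, and $L(G)$ is the minimum length of a sentence defining $G$, where length is the number of symbols with each variable and each relation symbol counted as a single symbol. *)

(* Defs.v *)
From mathcomp Require Import all_boot.
Set Implicit Arguments. Unset Strict Implicit. Unset Printing Implicit Defensive.

Fixpoint tower (i : nat) : nat :=
  match i with 0 => 1 | i'.+1 => 2 ^ tower i' end.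

(* log* n = min { i : T(i) >= n }; since T(i) >= i, the search over 0..n suffices. *)
Definition logstar (n : nat) : nat :=
  find (fun i => n <= tower i) (iota 0 n.+1).

Inductive form : Type :=
| FAdj : nat -> nat -> form
| FEq  : nat -> nat -> form
| FNot : form -> form
| FAnd : form -> form -> form
| FOr  : form -> form -> form
| FImp : form -> form -> form
| FIff : form -> form -> form
| FEx  : nat -> form -> form
| FAll : nat -> form -> form.

Fixpoint qrank (f : form) : nat :=
  match f with
  | FAdj _ _ | FEq _ _ => 0
  | FNot g => qrank g
  | FAnd g h | FOr g h | FImp g h | FIff g h => maxn (qrank g) (qrank h)
  | FEx _ g | FAll _ g => (qrank g).+1
  end.

(* Length: number of symbols, each variable and relation symbol counting as one.
   Atoms "x ~ y", "x = y" have 3 symbols; "~phi" adds 1; binary connectives are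
   written with parentheses "(phi * psi)" adding 3; "Qx phi" adds 2. *)
Fixpoint flen (f : form) : nat :=
  match f with
  | FAdj _ _ | FEq _ _ => 3
  | FNot g => (flen g).+1
  | FAnd g h | FOr g h | FImp g h | FIff g h => flen g + flen h + 3
  | FEx _ g | FAll _ g => (flen g).+2
  end.

Fixpoint free (f : form) (v : nat) : bool :=
  match f with
  | FAdj x y | FEq x y => (x == v) || (y == v)
  | FNot g => free g v
  | FAnd g h | FOr g h | FImp g h | FIff g h => free g v || free h v
  | FEx x g | FAll x g => (x != v) && free g v
  end.

Definition sentence (f : form) : Prop := forall v, free f v = false.

Definition upd (V : Type) (env : nat -> V) (x : nat) (a : V) : nat -> V :=
  fun y => if y == x then a else env y.

Fixpoint sat (V : Type) (R : V -> V -> Prop) (env : nat -> V) (f : form) : Prop :=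
  match f with
  | FAdj x y => R (env x) (env y)
  | FEq x y => env x = env y
  | FNot g => ~ sat R env g
  | FAnd g h => sat R env g /\ sat R env h
  | FOr g h => sat R env g \/ sat R env h
  | FImp g h => sat R env g -> sat R env h
  | FIff g h => sat R env g <-> sat R env h
  | FEx x g => exists a : V, sat R (upd env x a) g
  | FAll x g => forall a : V, sat R (upd env x a) g
  end.

Definition holds (V : Type) (R : V -> V -> Prop) (f : form) : Prop :=
  forall env : nat -> V, sat R env f.

Definition is_graph (V : Type) (R : V -> V -> Prop) : Prop :=
  inhabited V /\ (forall x y, R x y -> R y x) /\ (forall x, ~ R x x).

Definition iso (T : finType) (e : rel T) (V : Type) (R : V -> V -> Prop) : Prop :=
  exists (f : T -> V) (g : V -> T),
    (forall x, g (f x) = x) /\ (forall y, f (g y) = y) /\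
    (forall x y, R (f x) (f y) <-> e x y).

Definition defines (T : finType) (e : rel T) (phi : form) : Prop :=
  sentence phi /\ holds (fun x y => e x y) phi /\
  (forall (V : Type) (R : V -> V -> Prop),
      is_graph R -> ~ iso e R -> ~ holds R phi).

Definition is_D (T : finType) (e : rel T) (d : nat) : Prop :=
  (exists phi, defines e phi /\ qrank phi = d) /\
  (forall phi, defines e phi -> d <= qrank phi).

Definition is_L (T : finType) (e : rel T) (l : nat) : Prop :=
  (exists phi, defines e phi /\ flen phi = l) /\
  (forall phi, defines e phi -> l <= flen phi).

(* Main.v *)
Require Import Defs.
From HB Require Import structures.
From mathcomp Require Import all_boot.
From mathcomp Require Import zify.
From Stdlib Require Import ClassicalEpsilon Classical.
Set Implicit Arguments. Unset Strict Implicit. Unset Printing Implicit Defensive.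

Fixpoint form_eqb (f g : form) : bool :=
  match f, g with
  | FAdj a b, FAdj c d => (a == c) && (b == d)
  | FEq a b, FEq c d => (a == c) && (b == d)
  | FNot f1, FNot g1 => form_eqb f1 g1
  | FAnd f1 f2, FAnd g1 g2 => form_eqb f1 g1 && form_eqb f2 g2
  | FOr f1 f2, FOr g1 g2 => form_eqb f1 g1 && form_eqb f2 g2
  | FImp f1 f2, FImp g1 g2 => form_eqb f1 g1 && form_eqb f2 g2
  | FIff f1 f2, FIff g1 g2 => form_eqb f1 g1 && form_eqb f2 g2
  | FEx x f1, FEx y g1 => (x == y) && form_eqb f1 g1
  | FAll x f1, FAll y g1 => (x == y) && form_eqb f1 g1
  | _, _ => false
  end.

Lemma form_eqb_refl f : form_eqb f f.
Proof. by elim: f => //= *; rewrite ?eqxx //= ; apply/andP. Qed.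

Lemma form_eqb_eq f g : form_eqb f g -> f = g.
Proof.
elim: f g => [a b|a b|f IH|f IHf g IHg|f IHf g IHg|f IHf g IHg|f IHf g IHg|x f IH|x f IH]
  [c d|c d|g1|g1 g2|g1 g2|g1 g2|g1 g2|y g1|y g1] //=;
  try (by case/andP=> /eqP-> /eqP->);
  try (by move/IH->);
  try (by case/andP=> /IHf-> /IHg->);
  by case/andP=> /eqP-> /IH->.
Qed.

Lemma form_eqbP : Equality.axiom form_eqb.
Proof.
move=> f g; apply: (iffP idP); first exact: form_eqb_eq.
by move=> ->; exact: form_eqb_refl.
Qed.

HB.instance Definition _ := hasDecEq.Build form form_eqbP.

Section BFdef.
Variables (A B : Type) (RA : A -> A -> Prop) (RB : B -> B -> Prop).

Definition BF0 (W : seq nat) (s : nat -> A) (r : nat -> B) : Prop :=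
  forall i j, i \in W -> j \in W ->
    (RA (s i) (s j) <-> RB (r i) (r j)) /\ (s i = s j <-> r i = r j).

Fixpoint BF (k : nat) (W : seq nat) (s : nat -> A) (r : nat -> B) : Prop :=
  match k with
  | 0 => BF0 W s r
  | k'.+1 => BF0 W s r /\ forall x, x \notin W ->
      (forall y, exists b, BF k' (x :: W) (upd s x y) (upd r x b)) /\
      (forall b, exists y, BF k' (x :: W) (upd s x y) (upd r x b))
  end.

Lemma BF_BF0 k W s r : BF k W s r -> BF0 W s r.
Proof. by case: k => [|k] //= []. Qed.

Lemma sumn_ge v W : v \in W -> v <= sumn W.
Proof. elim: W => //= a W IH; rewrite in_cons => /orP[/eqP->|/IH]; lia. Qed.

Lemma BF0_ren W s r W' s' r' (p : nat -> nat) : BF0 W s r ->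
  (forall v, v \in W' -> [/\ p v \in W, s' v = s (p v) & r' v = r (p v)]) ->
  BF0 W' s' r'.
Proof.
move=> H Hp i j hi hj; have [pi si ri] := Hp _ hi; have [pj sj rj] := Hp _ hj.
by rewrite si sj ri rj; apply: H.
Qed.

Lemma BF_ren k W s r W' s' r' (p : nat -> nat) : BF k W s r ->
  (forall v, v \in W' -> [/\ p v \in W, s' v = s (p v) & r' v = r (p v)]) ->
  BF k W' s' r'.
Proof.
elim: k W s r W' s' r' p => [|k IH] W s r W' s' r' p; first exact: BF0_ren.
move=> [H0 H] Hp; split; first exact: BF0_ren H0 Hp.
move=> x xW'; set z := (sumn W).+1.
have zW : z \notin W by apply/negP => /sumn_ge; rewrite /z; lia.
have [Hf Hb] := H z zW.
pose p' := fun v => if v == x then z else p v.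
have Hp' : forall b y, forall v, v \in x :: W' ->
   [/\ p' v \in z :: W, upd s' x y v = upd s z y (p' v) & upd r' x b v = upd r z b (p' v)].
  move=> b y v; rewrite in_cons /p' /upd; case: eqP => [->|nvx] /=.
    by rewrite eqxx !in_cons eqxx.
  move=> vW; have [pv sv rv] := Hp _ vW.
  have pz : (p v == z) = false by apply/negbTE/negP => /eqP pz; rewrite -pz pv in zW.
  by rewrite pz in_cons pv orbT.
split.
- move=> y; have [b Hb'] := Hf y; exists b; exact: IH Hb' (Hp' b y).
- move=> b; have [y Hy] := Hb b; exists y; exact: IH Hy (Hp' b y).
Qed.

Lemma BF_sat phi k W s r : qrank phi <= k -> (forall v, free phi v -> v \in W) ->
  BF k W s r -> (sat RA s phi <-> sat RB r phi).
Proof.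
elim: phi k W s r => [a b|a b|f IH|f IHf g IHg|f IHf g IHg|f IHf g IHg|f IHf g IHg|x f IH|x f IH]
   k W s r /=.
- move=> _ Hf /BF_BF0 H0; have [] := H0 a b; try (apply: Hf; rewrite eqxx ?orbT //).
  by [].
- move=> _ Hf /BF_BF0 H0; have [] := H0 a b; try (apply: Hf; rewrite eqxx ?orbT //).
  by [].
- by move=> hq hf hB; have := IH _ _ _ _ hq hf hB; tauto.
- rewrite geq_max => /andP[h1 h2] hf hB.
  have := IHf _ _ _ _ h1 (fun v hv => hf v (introT orP (or_introl hv))) hB.
  have := IHg _ _ _ _ h2 (fun v hv => hf v (introT orP (or_intror hv))) hB. tauto.
- rewrite geq_max => /andP[h1 h2] hf hB.
  have := IHf _ _ _ _ h1 (fun v hv => hf v (introT orP (or_introl hv))) hB.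
  have := IHg _ _ _ _ h2 (fun v hv => hf v (introT orP (or_intror hv))) hB. tauto.
- rewrite geq_max => /andP[h1 h2] hf hB.
  have := IHf _ _ _ _ h1 (fun v hv => hf v (introT orP (or_introl hv))) hB.
  have := IHg _ _ _ _ h2 (fun v hv => hf v (introT orP (or_intror hv))) hB. tauto.
- rewrite geq_max => /andP[h1 h2] hf hB.
  have := IHf _ _ _ _ h1 (fun v hv => hf v (introT orP (or_introl hv))) hB.
  have := IHg _ _ _ _ h2 (fun v hv => hf v (introT orP (or_intror hv))) hB. tauto.
- case: k => [//|k] hq hf hB.
  set W' := [seq v <- W | v != x].
  have hB' : BF k.+1 W' s r.
    apply: (BF_ren (p := id) hB) => v; rewrite mem_filter => /andP[_ ->]; by split.
  have xW' : x \notin W' by rewrite mem_filter eqxx.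
  have [Hf Hb] := hB'.2 x xW'.
  have hf' : forall v, free f v -> v \in x :: W'.
    move=> v fv; rewrite in_cons mem_filter; case: (eqVneq v x) => //= nvx.
    by apply: hf; rewrite eq_sym nvx.
  split.
  + move=> [y Hy]; have [b Hb'] := Hf y; exists b; exact/(IH _ _ _ _ hq hf' Hb').
  + move=> [b Hb']; have [y Hy] := Hb b; exists y; exact/(IH _ _ _ _ hq hf' Hy).
- case: k => [//|k] hq hf hB.
  set W' := [seq v <- W | v != x].
  have hB' : BF k.+1 W' s r.
    apply: (BF_ren (p := id) hB) => v; rewrite mem_filter => /andP[_ ->]; by split.
  have xW' : x \notin W' by rewrite mem_filter eqxx.
  have [Hf Hb] := hB'.2 x xW'.
  have hf' : forall v, free f v -> v \in x :: W'.
    move=> v fv; rewrite in_cons mem_filter; case: (eqVneq v x) => //= nvx.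
    by apply: hf; rewrite eq_sym nvx.
  split.
  + move=> H b; have [y Hy] := Hb b; exact/(IH _ _ _ _ hq hf' Hy).
  + move=> H y; have [b Hb'] := Hf y; exact/(IH _ _ _ _ hq hf' Hb').
Qed.

End BFdef.

Lemma BF_refl (A : Type) (RA : A -> A -> Prop) k W s : BF RA RA k W s s.
Proof.
elim: k W s => [|k IH] W s /=; first by move=> i j _ _; split.
split; first by move=> i j _ _; split.
by move=> x _; split=> y; exists y; apply: IH.
Qed.


Definition TT := FAll 0 (FEq 0 0).
Fixpoint bigAnd (l : seq form) := if l is a :: l' then FAnd a (bigAnd l') else TT.
Fixpoint bigOr (l : seq form) := if l is a :: l' then FOr a (bigOr l') else FNot TT.

Lemma sat_bigAnd (V : Type) (R : V -> V -> Prop) r l :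
  sat R r (bigAnd l) <-> forall f, f \in l -> sat R r f.
Proof.
elim: l r => [|a l IH] r /=; first by split=> // _ a.
rewrite IH; split=> [[h1 h2] f|h]; first by rewrite in_cons => /orP[/eqP->|/h2].
by split=> [|f hf]; apply: h; rewrite in_cons ?eqxx ?hf ?orbT.
Qed.

Lemma sat_bigOr (V : Type) (R : V -> V -> Prop) r l :
  sat R r (bigOr l) <-> exists2 f, f \in l & sat R r f.
Proof.
elim: l r => [|a l IH] r /=; first by split=> [h|[]//]; exfalso; apply: h => b.
rewrite IH; split=> [[h|[f hf1 hf2]]|[f]]; first by exists a; rewrite ?in_cons ?eqxx.
  by exists f; rewrite ?in_cons ?hf1 ?orbT.
by rewrite in_cons => /orP[/eqP->|hf]; [left|right; exists f].
Qed.

Lemma free_bigAnd l v : free (bigAnd l) v -> exists2 f, f \in l & free f v.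
Proof.
elim: l => [|a l IH] /=; first by case: eqP.
case/orP=> [h|/IH[f hf1 hf2]]; first by exists a; rewrite ?in_cons ?eqxx.
by exists f; rewrite ?in_cons ?hf1 ?orbT.
Qed.

Lemma free_bigOr l v : free (bigOr l) v -> exists2 f, f \in l & free f v.
Proof.
elim: l => [|a l IH] /=; first by case: eqP.
case/orP=> [h|/IH[f hf1 hf2]]; first by exists a; rewrite ?in_cons ?eqxx.
by exists f; rewrite ?in_cons ?hf1 ?orbT.
Qed.

Lemma flen_bigAnd l Y : (forall f, f \in l -> flen f <= Y) ->
  flen (bigAnd l) <= size l * (Y + 3) + 5.
Proof.
elim: l => [|a l IH] //= h.
have ha := h a (mem_head _ _).
have hl : flen (bigAnd l) <= size l * (Y + 3) + 5 by apply: IH => f hf; apply: h; rewrite in_cons hf orbT.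
rewrite mulSn; move: ha hl; set p := size l * (Y + 3); simpl; lia.
Qed.

Lemma flen_bigOr l Y : (forall f, f \in l -> flen f <= Y) ->
  flen (bigOr l) <= size l * (Y + 3) + 6.
Proof.
elim: l => [|a l IH] //= h.
have ha := h a (mem_head _ _).
have hl : flen (bigOr l) <= size l * (Y + 3) + 6 by apply: IH => f hf; apply: h; rewrite in_cons hf orbT.
rewrite mulSn; move: ha hl; set p := size l * (Y + 3); simpl; lia.
Qed.

Section Th.
Variables (T : finType) (e : rel T) (x0 : T).

Fixpoint tups (m : nat) : seq (seq T) :=
  if m is m'.+1 then [seq rcons t y | t <- tups m', y <- enum T] else [:: [::]].

Lemma mem_tups m t : (t \in tups m) = (size t == m).
Proof.
elim: m t => [|m IH] t /=; first by rewrite in_cons in_nil orbF; case: t.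
apply/idP/idP.
  by case/allpairsP=> [[t' y] /= [h1 _ ->]]; rewrite size_rcons eqSS -IH.
case/lastP: t => [//|t y]; rewrite size_rcons eqSS => h.
by apply: allpairs_f; rewrite ?IH ?mem_enum.
Qed.

Definition atoms (m : nat) : seq form :=
  [seq FAdj i j | i <- iota 0 m, j <- iota 0 m] ++ [seq FEq i j | i <- iota 0 m, j <- iota 0 m].

Lemma size_atoms m : size (atoms m) = 2 * (m * m).
Proof. by rewrite size_cat !size_allpairs size_iota; lia. Qed.

Definition sg (s : seq T) : nat -> T := fun i => nth x0 s i.

Definition semA (s : seq T) (a : form) : bool :=
  match a with
  | FAdj i j => e (sg s i) (sg s j)
  | FEq i j => sg s i == sg s j
  | _ => true
  end.

Definition lit (a : form) (b : bool) := if b then a else FNot a.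
Definition F0 (m : nat) (bs : seq bool) : form :=
  bigAnd [seq lit p.1 p.2 | p <- zip (atoms m) bs].
Definition Fk (m : nat) (L : seq form) : form :=
  FAnd (bigAnd [seq FEx m f | f <- L]) (FAll m (bigOr L)).

Fixpoint th (k : nat) (s : seq T) : form :=
  match k with
  | 0 => F0 (size s) [seq semA s a | a <- atoms (size s)]
  | k'.+1 => Fk (size s) [seq f <- undup [seq th k' t | t <- tups (size s).+1] |
                            [exists y, th k' (rcons s y) == f]]
  end.

Definition Ul k m := undup [seq th k t | t <- tups m].

Lemma thS k s : th k.+1 s =
  Fk (size s) [seq f <- Ul k (size s).+1 | [exists y, th k (rcons s y) == f]].
Proof. by []. Qed.

Lemma zip_map_lit (l : seq form) (g : form -> bool) :
  [seq lit p.1 p.2 | p <- zip l (map g l)] = [seq lit a (g a) | a <- l].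
Proof. by elim: l => //= a l ->. Qed.

Lemma th0E s : th 0 s = bigAnd [seq lit a (semA s a) | a <- atoms (size s)].
Proof. by rewrite /= /F0 zip_map_lit. Qed.

Lemma mem_atoms m a : a \in atoms m ->
  exists i j, [/\ i < m, j < m & (a = FAdj i j \/ a = FEq i j)].
Proof.
rewrite mem_cat => /orP[] /allpairsP [[i j] /= [hi hj ->]];
  exists i, j; rewrite !mem_iota /= in hi hj; split => //; tauto.
Qed.

Lemma atomsA m i j : i < m -> j < m -> FAdj i j \in atoms m.
Proof. by move=> hi hj; rewrite mem_cat; apply/orP; left; apply: allpairs_f; rewrite mem_iota. Qed.
Lemma atomsE m i j : i < m -> j < m -> FEq i j \in atoms m.
Proof. by move=> hi hj; rewrite mem_cat; apply/orP; right; apply: allpairs_f; rewrite mem_iota. Qed.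

Lemma free_th k s v : free (th k s) v -> v < size s.
Proof.
elim: k s => [|k IH] s.
  rewrite th0E => /free_bigAnd [f /mapP [a ha ->]].
  have [i [j [hi hj [->|->]]]] := mem_atoms ha; rewrite /lit;
  by case: (semA _ _) => /= /orP[] /eqP <-.
rewrite thS /Fk /= => /orP[/free_bigAnd [f /mapP [g hg ->]]|]; last first.
  move=> /andP[nv /free_bigOr [g hg hv]].
  move: hg; rewrite mem_filter /Ul mem_undup => /andP[_ /mapP [t ht eg]].
  move: hv; rewrite eg => /IH; move: ht. rewrite mem_tups => /eqP ->.
  move: nv; rewrite ltnS leq_eqVlt eq_sym => /negbTE ->; done.
move=> /= /andP[nv hv].
move: hg; rewrite mem_filter /Ul mem_undup => /andP[_ /mapP [t ht eg]].
move: hv; rewrite eg => /IH; move: ht; rewrite mem_tups => /eqP ->.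
move: nv; rewrite ltnS leq_eqVlt eq_sym => /negbTE ->; done.
Qed.

Definition RG := fun x y : T => (e x y : Prop).

Section Sem.
Variables (B : Type) (RB : B -> B -> Prop).

Lemma th0_sat s r : sat RB r (th 0 s) <-> BF0 RG RB (iota 0 (size s)) (sg s) r.
Proof.
rewrite th0E sat_bigAnd; split.
  move=> h i j; rewrite !mem_iota /= => hi hj; split.
    have := h _ (map_f (fun a => lit a (semA s a)) (atomsA hi hj)).
    rewrite /lit /= /RG; case: (e _ _) => /= H; [by split | by split => // /H].
  have := h _ (map_f (fun a => lit a (semA s a)) (atomsE hi hj)).
  rewrite /lit /=; case: (sg s i =P sg s j) => /= E H; [by split | by split => // /E].
move=> h f /mapP [a ha ->]; have [i [j [hi hj ha']]] := mem_atoms ha.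
have hi' : i \in iota 0 (size s) by rewrite mem_iota.
have hj' : j \in iota 0 (size s) by rewrite mem_iota.
have [h1 h2] := h i j hi' hj'.
case: ha' => ->; rewrite /lit /=.
  move: h1; rewrite /RG; case: (e _ _) => /= [[H _]|[_ H]]; [by apply: H | by move/H].
move: h2; case: (sg s i =P sg s j) => /= E [H1 H2]; [by apply: H1 | by move/H2].
Qed.

Lemma conv k s y b r :
  BF RG RB k (iota 0 (size s).+1) (sg (rcons s y)) (upd r (size s) b) <->
  BF RG RB k (size s :: iota 0 (size s)) (upd (sg s) (size s) y) (upd r (size s) b).
Proof.
have E : forall v, v \in iota 0 (size s).+1 -> sg (rcons s y) v = upd (sg s) (size s) y v.
  move=> v; rewrite mem_iota /sg /upd nth_rcons /= ltnS leq_eqVlt.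
  by case: (ltngtP v (size s)).
have M : forall v, (v \in iota 0 (size s).+1) = (v \in size s :: iota 0 (size s)).
  by move=> v; rewrite !mem_iota in_cons !mem_iota /= ltnS leq_eqVlt.
split=> h; apply: (BF_ren (p := id) h) => v hv; split => //.
- by rewrite M.
- by rewrite E // M.
- by rewrite -M.
- by rewrite E // M.
Qed.

Lemma ren_fresh k m W s r y b x : m \notin W -> x \notin W ->
  BF RG RB k (m :: W) (upd s m y) (upd r m b) ->
  BF RG RB k (x :: W) (upd s x y) (upd r x b).
Proof.
move=> mW xW h; apply: (BF_ren (p := fun v => if v == x then m else v) h) => v.
rewrite in_cons /upd; case: eqP => [->|nvx] /=; first by rewrite !eqxx in_cons eqxx.
move=> vW; have : v != m by apply/negP => /eqP vm; rewrite -vm vW in mW.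
by move/negbTE ->; rewrite in_cons vW orbT.
Qed.

Lemma memL k s f :
  f \in [seq f <- Ul k (size s).+1 | [exists y, th k (rcons s y) == f]]
  <-> exists y, th k (rcons s y) = f.
Proof.
rewrite mem_filter /Ul mem_undup; split.
  by case/andP => /existsP [y /eqP h] _; exists y.
move=> [y <-]; apply/andP; split; first by apply/existsP; exists y.
by apply: map_f; rewrite mem_tups size_rcons.
Qed.

Lemma th_sat k s r : sat RB r (th k s) <-> BF RG RB k (iota 0 (size s)) (sg s) r.
Proof.
elim: k s r => [|k IH] s r; first exact: th0_sat.
have mW : size s \notin iota 0 (size s) by rewrite mem_iota /= ltnn.
rewrite thS /Fk [sat _ _ _]/= sat_bigAnd; split.
- move=> [hA hO].
  have forth : forall y, exists b, BF RG RB k (size s :: iota 0 (size s)) (upd (sg s) (size s) y) (upd r (size s) b).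
    move=> y; have := hA (FEx (size s) (th k (rcons s y))).
    case; first by apply: map_f; apply/memL; exists y.
    move=> b hb; exists b; apply/conv; move: hb => /IH; by rewrite size_rcons.
  have back : forall b, exists y, BF RG RB k (size s :: iota 0 (size s)) (upd (sg s) (size s) y) (upd r (size s) b).
    move=> b; have /sat_bigOr [f /memL [y <-] hf] := hO b.
    exists y; apply/conv; move: hf => /IH; by rewrite size_rcons.
  split.
    have [y hy] := back (r 0).
    apply: (BF0_ren (p := id) (BF_BF0 hy)) => v hv.
    have nv : (v == size s) = false by move: hv; rewrite mem_iota /=; case: ltngtP.
    by rewrite /upd nv in_cons hv orbT.
  move=> x xW; split.
    by move=> y; have [b hb] := forth y; exists b; exact: ren_fresh mW xW hb.
  by move=> b; have [y hy] := back b; exists y; exact: ren_fresh mW xW hy.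
- move=> [h0 h]; have [hf hb] := h _ mW; split.
    move=> f /mapP [g /memL [y <-] ->]; have [b hB] := hf y.
    by exists b; apply/IH; rewrite size_rcons; apply/conv.
  move=> b; have [y hB] := hb b; apply/sat_bigOr; exists (th k (rcons s y)).
    by apply/memL; exists y.
  by apply/IH; rewrite size_rcons; apply/conv.
Qed.

End Sem.
End Th.


Fixpoint bseqs (N : nat) : seq (seq bool) :=
  if N is N'.+1 then [seq b :: bs | b <- [:: true; false], bs <- bseqs N'] else [:: [::]].

Lemma bseqsS N : bseqs N.+1 = [seq b :: bs | b <- [:: true; false], bs <- bseqs N].
Proof. by []. Qed.

Lemma size_bseqs N : size (bseqs N) = 2 ^ N.
Proof. by elim: N => // N IH; rewrite bseqsS size_allpairs IH expnS. Qed.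

Lemma mem_bseqs N bs : size bs = N -> bs \in bseqs N.
Proof.
elim: N bs => [|N IH] [|b bs] // [h]; rewrite bseqsS; apply: allpairs_f; last exact: IH.
by case: b.
Qed.

Lemma count_lemma (l : seq form) (F : seq bool -> form) N :
  (forall f, f \in l -> exists2 bs, size bs = N & f = F bs) -> size (undup l) <= 2 ^ N.
Proof.
move=> H; rewrite -(size_bseqs N) -(size_map F).
apply: uniq_leq_size (undup_uniq l) _ => f; rewrite mem_undup => /H [bs hs ->].
by apply: map_f; exact: mem_bseqs.
Qed.

Lemma pow_bound x : 14 * x + 5 <= 2 ^ (2 * x + 4).
Proof.
have h1 := ltn_expl x (isT : 1 < 2).
have h2 : 2 ^ x <= 2 ^ (2 * x) by apply: leq_pexp2l => //; lia.
rewrite expnD; move: h1 h2; set p := 2 ^ x; set q := 2 ^ (2 * x); simpl; lia.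
Qed.

Lemma poly_exp Y : 16 <= Y -> Y * (2 * Y + 8) + 16 <= 2 ^ Y.
Proof.
move=> h; have [j ->] : exists j, Y = j + 16 by exists (Y - 16); lia.
elim: j => [|j IH]; first by [].
rewrite addSn expnS; move: IH; set p := 2 ^ (j + 16); nia.
Qed.

Definition Yb k m := iter k (fun x => 2 ^ x) (2 ^ (2 * ((m + k) * (m + k)) + 4)).

Lemma YbS k m : Yb k.+1 m = 2 ^ (Yb k m.+1).
Proof. by rewrite /Yb iterS -[m + k.+1]addSnnS. Qed.

Lemma Yb_ge k m : 16 <= Yb k m.
Proof.
elim: k m => [|k IH] m.
  by rewrite /Yb /=; apply: (@leq_pexp2l 2 4) => //; lia.
rewrite YbS; apply: leq_trans (IH m.+1) _; exact: ltnW (ltn_expl _ (isT : 1 < 2)).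
Qed.

Section Bounds.
Variables (T : finType) (e : rel T) (x0 : T).

Lemma Ul0 m : size (Ul e x0 0 m) <= 2 ^ (2 * (m * m)).
Proof.
rewrite -(size_atoms m); apply: (count_lemma (F := F0 m)) => f /mapP [t ht ->].
move: ht; rewrite mem_tups => /eqP <-.
by exists [seq semA e x0 t a | a <- atoms (size t)]; rewrite ?size_map.
Qed.

Lemma UlS k m : size (Ul e x0 k.+1 m) <= 2 ^ (size (Ul e x0 k m.+1)).
Proof.
apply: (count_lemma (F := fun bs => Fk m (mask bs (Ul e x0 k m.+1)))) => f /mapP [t ht ->].
move: ht; rewrite mem_tups => /eqP <-.
eexists; last by rewrite thS filter_mask.
by rewrite size_map.
Qed.

Lemma flen_th0 s : flen (th e x0 0 s) <= 2 * (size s * size s) * 7 + 5.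
Proof.
rewrite th0E -size_atoms.
have -> : size (atoms (size s)) = size [seq lit a (semA e x0 s a) | a <- atoms (size s)] by rewrite size_map.
apply: (flen_bigAnd (Y := 4)) => f /mapP [a ha ->].
have [i [j [_ _ [->|->]]]] := mem_atoms ha; rewrite /lit; by case: (semA _ _ _ _).
Qed.

Lemma flen_thS k s Y : size (Ul e x0 k (size s).+1) <= Y ->
  (forall t, size t = (size s).+1 -> flen (th e x0 k t) <= Y) ->
  flen (th e x0 k.+1 s) <= Y * (2 * Y + 8) + 16.
Proof.
move=> hU ht; rewrite thS /Fk.
set L := [seq f <- _ | _].
have hL : size L <= Y by apply: leq_trans hU; rewrite size_filter count_size.
have hf : forall f, f \in L -> flen f <= Y.
  move=> f; rewrite mem_filter /Ul mem_undup => /andP[_ /mapP [t ht' ->]].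
  by apply: ht; move: ht'; rewrite mem_tups => /eqP.
have h1 : flen (bigAnd [seq FEx (size s) f | f <- L]) <= size L * (Y + 2 + 3) + 5.
  have -> : size L = size [seq FEx (size s) f | f <- L] by rewrite size_map.
  apply: flen_bigAnd => f /mapP [g hg ->] /=; have := hf g hg; lia.
have h2 := flen_bigOr hf.
rewrite /=; move: h1 h2 hL; set a := flen _; set b := flen _; nia.
Qed.

Lemma th_bound k m : size (Ul e x0 k m) <= Yb k m /\
  forall s, size s = m -> flen (th e x0 k s) <= Yb k m.
Proof.
elim: k m => [|k IH] m.
  rewrite /Yb /= addn0; split.
    apply: leq_trans (Ul0 m) _; apply: leq_pexp2l => //; lia.
  move=> s hs; apply: leq_trans (flen_th0 s) _; rewrite hs.
  apply: leq_trans (pow_bound (m * m)); lia.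
have [IH1 IH2] := IH m.+1; split.
  rewrite YbS; apply: leq_trans (UlS k m) _; exact: leq_pexp2l.
move=> s hs; rewrite YbS.
apply: leq_trans (poly_exp (Yb_ge k m.+1)).
apply: flen_thS; rewrite hs //.
Qed.

End Bounds.

Lemma tower_add a b : tower (a + b) = iter a (fun x => 2 ^ x) (tower b).
Proof. by elim: a => //= a ->. Qed.

Lemma iter_mono a x y : x <= y -> iter a (fun x => 2 ^ x) x <= iter a (fun x => 2 ^ x) y.
Proof. by elim: a => //= a IH h; apply: leq_pexp2l => //; apply: IH. Qed.

Lemma tower_ge i : i <= tower i.
Proof. elim: i => //= i IH; apply: leq_trans (ltn_expl _ (isT : 1 < 2)); by rewrite ltnS. Qed.

Lemma logstar_spec d : d <= tower (logstar d).
Proof.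
rewrite /logstar.
have hh : has (fun i => d <= tower i) (iota 0 d.+1).
  by apply/hasP; exists d; [rewrite mem_iota; lia | exact: tower_ge].
have hf : find (fun i => d <= tower i) (iota 0 d.+1) < d.+1.
  by rewrite -{2}(size_iota 0 d.+1) -has_find.
by have := nth_find 0 hh; rewrite nth_iota // add0n.
Qed.

Lemma A1 t : 2 * (t * t) + 4 <= 2 ^ (2 * t + 3).
Proof.
elim: t => [//|t IH].
have -> : 2 * t.+1 + 3 = (2 * t + 3).+2 by lia.
rewrite !expnS; move: IH; set p := 2 ^ (2 * t + 3); nia.
Qed.

Lemma A2 t : 2 * t + 3 <= 2 ^ (t + 2).
Proof.
elim: t => [//|t IH]; rewrite addSn expnS; move: IH; set p := 2 ^ (t + 2); lia.
Qed.

Lemma final_bound d : Yb d 0 <= tower (d + logstar d + 5).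
Proof.
rewrite /Yb add0n -addnA tower_add; apply: iter_mono.
set t := tower (logstar d).
have ht : d <= t := logstar_spec d.
have -> : tower (logstar d + 5) = 2 ^ (2 ^ (2 ^ (2 ^ (2 ^ t)))) by rewrite !addnS addn0.
apply: leq_pexp2l => //.
apply: leq_trans (_ : 2 * (t * t) + 4 <= _).
  by rewrite leq_add2r leq_mul2l /= leq_mul.
apply: leq_trans (A1 t) _; apply: leq_pexp2l => //.
apply: leq_trans (A2 t) _; apply: leq_pexp2l => //.
have h3 : t + 2 <= 2 ^ (t + 1) by have := ltn_expl (t + 1) (isT : 1 < 2); lia.
apply: leq_trans h3 _; apply: leq_pexp2l => //.
by have := ltn_expl t (isT : 1 < 2); lia.
Qed.


Lemma ex_min (P : nat -> Prop) : (exists n, P n) -> exists n, P n /\ forall m, P m -> n <= m.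
Proof.
move=> [n Pn].
suff: forall N n, n <= N -> P n -> exists n, P n /\ forall m, P m -> n <= m by apply; last exact Pn.
elim=> [|N IH] k hk Pk.
  by exists k; split=> // m _; move: hk; rewrite leqn0 => /eqP->.
case: (classic (exists m, m < k /\ P m)) => [[m [hm Pm]]|H].
  by apply: (IH m) => //; lia.
exists k; split=> // m Pm; rewrite leqNgt; apply/negP => hm; apply: H; by exists m.
Qed.

Section Main.
Variables (T : finType) (e : rel T) (x0 : T).

Lemma BF_iso (V : Type) (R : V -> V -> Prop) s r :
  BF (RG e) R (#|T|).+1 [::] s r -> iso e R.
Proof.
move=> h.
set l := enum T; set n := #|T|.
have cn : n = size l by rewrite /n cardT.
have claim : forall j, j <= n -> exists r', BF (RG e) R (n.+1 - j) (iota 0 j) (sg x0 l) r'.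
  elim=> [|j IH] hj.
    by exists r; rewrite subn0; apply: (BF_ren (p := id) h).
  have [r' h'] := IH (ltnW hj).
  rewrite subSn in h'; last exact: ltnW.
  have jW : j \notin iota 0 j by rewrite mem_iota /=; lia.
  have [b hb] := (h'.2 j jW).1 (nth x0 l j).
  exists (upd r' j b); rewrite subSS.
  apply: (BF_ren (p := id) hb) => v; rewrite !mem_iota /= => hv; split.
  - by rewrite in_cons mem_iota; apply/orP; case: (ltngtP v j); lia.
  - by rewrite /upd /sg; case: eqP => // ->.
  - by [].
have [r' hr] := claim n (leqnn n).
rewrite subSnn in hr; case: hr => H0 H.
have idx : forall t, index t l < n by move=> t; rewrite cn index_mem mem_enum.
have sgi : forall t, sg x0 l (index t l) = t by move=> t; rewrite /sg nth_index // mem_enum.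
have inI : forall t, index t l \in iota 0 n by move=> t; rewrite mem_iota /= idx.
pose f := fun t => r' (index t l).
have surj : forall b, exists y, f y = b.
  move=> b; have nW : n \notin iota 0 n by rewrite mem_iota /= ltnn.
  have [y hy] := (H n nW).2 b; exists y.
  have iy : index y l \in n :: iota 0 n by rewrite in_cons inI orbT.
  have [_ h2] := hy n (index y l) (mem_head _ _) iy.
  move: h2; rewrite /upd eqxx (ltn_eqF (idx y)) sgi /f => h2; symmetry; by apply/h2.
have finj : forall t1 t2, f t1 = f t2 -> t1 = t2.
  move=> t1 t2 hf; have [_ h2] := H0 _ _ (inI t1) (inI t2).
  by rewrite -(sgi t1) -(sgi t2); apply/h2.
pose g := fun b => proj1_sig (constructive_indefinite_description _ (surj b)).
have fg : forall b, f (g b) = b by move=> b; rewrite /g; case: constructive_indefinite_description.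
exists f, g; split; [|split].
- by move=> x; apply: finj; rewrite fg.
- exact: fg.
- move=> x y; have [h1 _] := H0 _ _ (inI x) (inI y); rewrite /RG !sgi in h1; rewrite /f; tauto.
Qed.

Definition theta k := th e x0 k [::].

Lemma theta_sentence k : sentence (theta k).
Proof. by move=> v; apply/negP => /free_th. Qed.

Lemma theta_holds k : holds (fun x y => e x y) (theta k).
Proof.
move=> r; apply/(th_sat e x0 (RG e)); apply: (BF_ren (p := id) (BF_refl (RG e) k [::] r)).
by [].
Qed.

Lemma theta_defines_q phi k : defines e phi -> qrank phi <= k -> defines e (theta k).
Proof.
move=> [sphi [hphi dphi]] hq; split; first exact: theta_sentence.
split; first exact: theta_holds.
move=> V R isg niso hth; apply: (dphi V R isg niso) => r.
have hB := (th_sat e x0 R k [::] r).1 (hth r).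
have hfree : forall v, free phi v -> v \in [::] by move=> v; rewrite sphi.
exact: (BF_sat hq hfree hB).1 (hphi _).
Qed.

Lemma theta_defines_n : defines e (theta (#|T|).+1).
Proof.
split; first exact: theta_sentence.
split; first exact: theta_holds.
move=> V R [[v] _] niso hth; apply: niso.
exact: BF_iso ((th_sat e x0 R _ [::] (fun _ => v)).1 (hth _)).
Qed.

End Main.

Theorem theorem10p1 :
  exists C : nat,
    forall (T : finType) (e : rel T),
      symmetric e -> irreflexive e -> 0 < #|T| ->
      exists d l : nat,
        is_D e d /\ is_L e l /\ l <= tower (d + logstar d + C).
Proof.
exists 5 => T e _ _ /card_gt0P [x0 _].
have [d [[phi0 [dphi0 qphi0]] mind]] :=
  @ex_min (fun d => exists phi, defines e phi /\ qrank phi = d)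
    (ex_intro _ _ (ex_intro _ _ (conj (theta_defines_n e x0) erefl))).
have [l [[psi [dpsi lpsi]] minl]] :=
  @ex_min (fun l => exists phi, defines e phi /\ flen phi = l)
    (ex_intro _ _ (ex_intro _ _ (conj (theta_defines_n e x0) erefl))).
exists d, l; split; [|split].
- split; first by exists phi0.
  by move=> phi dphi; apply: mind; exists phi.
- split; first by exists psi.
  by move=> phi dphi; apply: minl; exists phi.
- have dth : defines e (theta e x0 d) by apply: (theta_defines_q x0 dphi0); rewrite qphi0.
  apply: leq_trans (minl _ (ex_intro _ _ (conj dth erefl))) _.
  apply: leq_trans (final_bound d).
  by have [_ ] := th_bound e x0 d 0; apply.
Qed.
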